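(* Let $G$ be a cograph with cotree $T$, and let $d$ be a non-negative integer with $d\le\chi(G)$. Set $h=\chi(G)-d$. Among all $h$-colourings of $G$ with the minimum possible number of monochromatic edges, there is one that satisfies Property 1. Property 1 requires the following for every 0-node $p$ of $T$ with children $q,r$: the colour classes within $T_q$ and within $T_r$ can each be ordered by non-increasing size so that, for every $i\in[\chi(T_p)]$, the $i$-th largest colour class of $T_q$ and the $i$-th largest colour class of $T_r$ have the same colour. Here an empty colour class is considered to have the same colour as every other class.
   Context: A cotree of a cograph $G$ is a rooted binary tree $T$ whose leaves correspond to the vertices of $G$ and whose interior nodes are labelled 0 or 1. To each node $p$ a cograph $T_p$ is associated: $T_p=K_1$ for a leaf; $T_p=T_q+T_r$ (disjoint union) if $p$ is a 0-node with children $q,r$; and $T_p=T_q\times T_r$ (join, i.e. all edges between $T_q$ and $T_r$ added) if $p$ is a 1-node with children $q,r$. The cograph associated with the root is $G$. Every cograph has a cotree. An $h$-colouring is any map $c:V(G)\to\{1,\dots,h\}$, not necessarily proper. An edge is monochromatic if both endpoints get the same colour. For a node $p$, the colour classes of $c$ in $T_p$ are the sets $c^{-1}(j)\cap V(T_p)$. *)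

(* Defs.v *)
From mathcomp Require Import all_boot all_fingroup.
Set Implicit Arguments. Unset Strict Implicit. Unset Printing Implicit Defensive.

(* A cotree: a rooted binary tree whose leaves are labelled by vertices and
   whose interior nodes are labelled 0 (false: disjoint union) or 1 (true: join). *)
Inductive cotree (V : Type) : Type :=
  | Leaf of V
  | Node of bool & cotree V & cotree V.
Arguments Leaf {V} _.
Arguments Node {V} _ _ _.

Fixpoint leaves (V : Type) (t : cotree V) : seq V :=
  match t with
  | Leaf v => [:: v]
  | Node _ l r => leaves l ++ leaves r
  end.

Definition vset (V : finType) (t : cotree V) : {set V} := [set v | v \in leaves t].

Fixpoint cotree_adj (V : eqType) (t : cotree V) (u v : V) : bool :=
  match t with
  | Leaf _ => false
  | Node b l r =>
      [|| cotree_adj l u v, cotree_adj r u v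
        | b && (((u \in leaves l) && (v \in leaves r)) ||
                ((v \in leaves l) && (u \in leaves r)))]
  end.

Fixpoint is_subtree (V : Type) (S T : cotree V) : Prop :=
  S = T \/ match T with
           | Leaf _ => False
           | Node _ l r => is_subtree S l \/ is_subtree S r
           end.

Definition is_cotree_of (V : finType) (e : rel V) (T : cotree V) : Prop :=
  [/\ uniq (leaves T), forall v, v \in leaves T & forall u v, e u v = cotree_adj T u v].

Definition colourable (V : finType) (e : rel V) (A : {set V}) (k : nat) : bool :=
  [exists c : {ffun V -> 'I_k},
     [forall u in A, forall v in A, e u v ==> (c u != c v)]].

(* chromatic number of the (loopless) induced subgraph on A: least k <= #|A|
   admitting a proper k-colouring (#|A| colours always suffice when loopless) *)
Definition chi (V : finType) (e : rel V) (A : {set V}) : nat :=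
  \big[minn/#|A|]_(k < #|A|.+1 | colourable e A k) (k : nat).

Definition mono_edges (V : finType) (e : rel V) (h : nat) (c : V -> 'I_h) : nat :=
  #|[set E : {set V} | [exists u, exists v,
        [&& u != v, e u v, c u == c v & E == [set u; v]]]]|.

Definition colour_class (V : finType) (h : nat) (c : V -> 'I_h) (t : cotree V) (j : 'I_h)
  : {set V} := [set v in vset t | c v == j].

Definition nonincreasing_order (V : finType) (h : nat) (c : V -> 'I_h) (t : cotree V)
  (s : {perm 'I_h}) : Prop :=
  forall i j : 'I_h, i <= j -> #|colour_class c t (s j)| <= #|colour_class c t (s i)|.

Definition property1 (V : finType) (T : cotree V) (h : nat) (c : V -> 'I_h) : Prop :=
  forall q r : cotree V, is_subtree (Node false q r) T ->
    exists sq sr : {perm 'I_h},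
      [/\ nonincreasing_order c q sq, nonincreasing_order c r sr &
        forall i : 'I_h, i < chi (cotree_adj (Node false q r)) (vset (Node false q r)) ->
          [|| sq i == sr i, colour_class c q (sq i) == set0
            | colour_class c r (sr i) == set0]].

(* Main.v *)
Require Import Defs.
From mathcomp Require Import all_boot all_fingroup.
From mathcomp Require Import zify.
Set Implicit Arguments. Unset Strict Implicit. Unset Printing Implicit Defensive.

Section Tree.
Variable V : finType.
Implicit Types (t S T A B C l r q : cotree V).

Lemma subtree_refl S : is_subtree S S.
Proof. by case: S => [v|b l r]; left. Qed.

Lemma subtree_trans A B C : is_subtree A B -> is_subtree B C -> is_subtree A C.
Proof.
move=> hAB; elim: C => [v|b l IHl r IHr].
  by case=> // <-.
case=> [<-//|[h|h]].
- by right; left; apply: IHl.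
- by right; right; apply: IHr.
Qed.

Lemma subtree_l b l r : is_subtree l (Node b l r).
Proof. by right; left; apply: subtree_refl. Qed.
Lemma subtree_r b l r : is_subtree r (Node b l r).
Proof. by right; right; apply: subtree_refl. Qed.

Lemma subtree_leaves S T : is_subtree S T -> {subset leaves S <= leaves T}.
Proof.
elim: T => [v|b l IHl r IHr] /=.
  by case=> // -> .
case=> [->//|[h|h]] x hx; rewrite mem_cat.
- by rewrite (IHl h x hx).
- by rewrite (IHr h x hx) orbT.
Qed.

Lemma subtree_uniq S T : is_subtree S T -> uniq (leaves T) -> uniq (leaves S).
Proof.
elim: T => [v|b l IHl r IHr] /=.
  by case=> // ->.
case=> [->//|[h|h]]; rewrite cat_uniq => /and3P [u1 _ u2].
- exact: IHl.
- exact: IHr.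
Qed.

Lemma leaves_nonnil t : exists u, u \in leaves t.
Proof.
elim: t => [v|b l [u hu] r _] /=; first by exists v; rewrite inE.
by exists u; rewrite mem_cat hu.
Qed.

Lemma adj_sym t u v : cotree_adj t u v = cotree_adj t v u.
Proof.
elim: t => [w|b l IHl r IHr] //=.
by rewrite IHl IHr; congr [|| _, _ | _]; rewrite orbC.
Qed.

Lemma adj_out t u v : u \notin leaves t -> cotree_adj t u v = false.
Proof.
elim: t => [w|b l IHl r IHr] //=.
rewrite mem_cat negb_or => /andP [hl hr].
by rewrite IHl // IHr // (negbTE hl) (negbTE hr) !andbF.
Qed.

Lemma uniq_disj l r x : uniq (leaves l ++ leaves r) -> x \in leaves l -> x \notin leaves r.
Proof.
rewrite cat_uniq => /and3P [_ /hasPn h _] hx.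
by apply/negP => hr; move: (h x hr); rewrite hx.
Qed.

Lemma adj_module S T u u' v : is_subtree S T -> uniq (leaves T) ->
  u \in leaves S -> u' \in leaves S -> v \notin leaves S ->
  cotree_adj T u v = cotree_adj T u' v.
Proof.
elim: T => [w|b l IHl r IHr] hS hU hu hu' hv; first by [].
case: hS => [hS|[h|h]].
- rewrite hS in hv.
  by rewrite (adj_sym _ u v) (adj_sym _ u' v) (adj_out u hv) (adj_out u' hv).
- have ul : uniq (leaves l) by move: hU; rewrite cat_uniq => /and3P [].
  have hul := subtree_leaves h hu; have hul' := subtree_leaves h hu'.
  rewrite /= (IHl h ul hu hu' hv) (adj_out v (uniq_disj hU hul)) (adj_out v (uniq_disj hU hul')).
  by rewrite hul hul' (negbTE (uniq_disj hU hul)) (negbTE (uniq_disj hU hul')).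
- have ur : uniq (leaves r) by move: hU; rewrite cat_uniq => /and3P [].
  have hU' : uniq (leaves r ++ leaves l) by rewrite uniq_catC.
  have hur := subtree_leaves h hu; have hur' := subtree_leaves h hu'.
  rewrite /= (IHr h ur hu hu' hv) (adj_out v (uniq_disj hU' hur)) (adj_out v (uniq_disj hU' hur')).
  by rewrite hur hur' (negbTE (uniq_disj hU' hur)) (negbTE (uniq_disj hU' hur')).
Qed.

Lemma adj_cross q r T u v : is_subtree (Node false q r) T -> uniq (leaves T) ->
  u \in leaves q -> v \in leaves r -> cotree_adj T u v = false.
Proof.
elim: T => [w|b l IHl r' IHr] /=; first by case.
case=> [[<- <- <-]|[h|h]] hU hu hv.
- have hvq : v \notin leaves q by rewrite uniq_catC in hU; exact: (uniq_disj hU hv).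
  have hur : u \notin leaves r by exact: (uniq_disj hU hu).
  by rewrite (adj_out v (hur)) (adj_sym _ u v) (adj_out u hvq).
- have ul : uniq (leaves l) by move: hU; rewrite cat_uniq => /and3P [].
  have hul : u \in leaves l by apply: (subtree_leaves h); rewrite mem_cat hu.
  have hvl : v \in leaves l by apply: (subtree_leaves h); rewrite mem_cat hv orbT.
  rewrite (IHl h ul hu hv) (adj_out v (uniq_disj hU hul)).
  by rewrite (negbTE (uniq_disj hU hvl)) (negbTE (uniq_disj hU hul)) /= !andbF.
- have ur : uniq (leaves r') by move: hU; rewrite cat_uniq => /and3P [].
  have hU' : uniq (leaves r' ++ leaves l) by rewrite uniq_catC.
  have hur : u \in leaves r' by apply: (subtree_leaves h); rewrite mem_cat hu.
  have hvr : v \in leaves r' by apply: (subtree_leaves h); rewrite mem_cat hv orbT.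
  rewrite (IHr h ur hu hv) (adj_sym _ u v) (adj_out u (uniq_disj hU' hvr)).
  by rewrite (negbTE (uniq_disj hU' hvr)) (negbTE (uniq_disj hU' hur)) /= !andbF.
Qed.

End Tree.
Lemma card_sum (T : finType) (A : pred T) : #|A| = \sum_x (x \in A : nat).
Proof. by rewrite -sum1_card big_mkcond; apply: eq_bigr => x _; case: (x \in A). Qed.

Lemma sum_lt M n : \sum_(t < M) (t < n : nat) = minn n M.
Proof.
elim: M => [|M IH]; first by rewrite big_ord0 minn0.
rewrite big_ord_recr /= IH; case: (ltnP M n) => h; lia.
Qed.

Lemma sort_perm h (R : rel 'I_h) : total R -> transitive R ->
  exists s : {perm 'I_h}, forall i j : 'I_h, i <= j -> R (s i) (s j).
Proof.
move=> tot tr.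
set l := sort R (enum 'I_h).
have sz : size l = h by rewrite size_sort size_enum_ord.
have ul : uniq l by rewrite sort_uniq enum_uniq.
have f_inj : injective (fun i : 'I_h => nth i l i).
  move=> i j /= e; apply: ord_inj; apply/eqP.
  rewrite -(nth_uniq i (s:=l)) ?sz //.
  by rewrite e (set_nth_default i j) ?sz.
exists (perm f_inj) => i j hij; rewrite !permE.
rewrite (set_nth_default i j) ?sz //.
have refl : reflexive R by move=> x; case/orP: (tot x x).
apply: (sorted_leq_nth tr refl) => //; last by rewrite inE sz.
- exact: sort_sorted.
- by rewrite inE sz.
Qed.

Section Rearr.
Variable h : nat.

Lemma layer (a y : 'I_h -> nat) M : (forall j, a j <= M) -> (forall j, y j <= M) ->
  \sum_j a j * y j = \sum_(t < M) \sum_(s < M) #|[set j | (t < a j) && (s < y j)]|.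
Proof.
move=> ha hy.
have -> : \sum_j a j * y j = \sum_j \sum_(t < M) \sum_(s < M) ((t < a j) * (s < y j)).
  apply: eq_bigr => j _.
  rewrite -{1}(minn_idPl (ha j)) -{1}(minn_idPl (hy j)) -!sum_lt big_distrl.
  by apply: eq_bigr => t _; rewrite big_distrr.
rewrite exchange_big; apply: eq_bigr => t _.
rewrite exchange_big; apply: eq_bigr => s _.
by rewrite card_sum; apply: eq_bigr => j _; rewrite inE mulnb.
Qed.

Lemma rearr (a x : 'I_h -> nat) (rho : {perm 'I_h}) :
  (forall i j, a i < a j -> x (rho j) <= x (rho i)) ->
  \sum_j a j * x (rho j) <= \sum_j a j * x j.
Proof.
move=> anti.
set M := \sum_j (a j + x j).
have bnd j : a j + x j <= M by rewrite /M (bigD1 j) //= leq_addr.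
have ha j : a j <= M by apply: leq_trans (bnd j); apply: leq_addr.
have hx j : x j <= M by apply: leq_trans (bnd j); apply: leq_addl.
rewrite (layer (y := fun j => x (rho j)) ha (fun j => hx (rho j))) (layer ha hx).
apply: leq_sum => t _; apply: leq_sum => s _.
set U := [set j | t < a j].
set D' := [set j | s < x (rho j)].
set D := [set j | s < x j].
have -> : [set j | (t < a j) && (s < x (rho j))] = U :&: D' by apply/setP => j; rewrite !inE.
have -> : [set j | (t < a j) && (s < x j)] = U :&: D by apply/setP => j; rewrite !inE.
have cD : #|D'| = #|D|.
  have -> : D' = rho @^-1: D by apply/setP => j; rewrite !inE.
  by rewrite card_preimset //; apply: perm_inj.
case: (set_0Vmem (U :&: D')) => [->|[i hi]]; first by rewrite cards0.
move: hi; rewrite !inE => /andP [ti si].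
have sub : ~: U \subset D'.
  apply/subsetP => j; rewrite !inE -leqNgt => hj.
  apply: leq_trans si _; apply: anti; lia.
have e1 := cardsID U D'.
have e2 : D' :\: U = ~: U by rewrite setDE; apply/setIidPr.
have e3 := cardsID U D.
have e4 : #|D :\: U| <= #|~: U| by apply: subset_leq_card; apply: subsetDr.
rewrite e2 in e1; rewrite setIC [U :&: D]setIC; rewrite -(leq_add2r #|~: U|) e1 cD -e3 leq_add2l; exact: e4.
Qed.
End Rearr.
Section Main.
Variable V : finType.
Variable h : nat.
Implicit Types (t S T q r : cotree V) (c : V -> 'I_h).

Lemma cc_perm c c' (s : {perm 'I_h}) t j :
  (forall v, v \in leaves t -> c' v = s (c v)) -> colour_class c' t (s j) = colour_class c t j.
Proof.
move=> H; apply/setP => v; rewrite !inE; case hv: (v \in leaves t) => //=.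
by rewrite H // (inj_eq perm_inj).
Qed.

Lemma prop1_perm T c c' (s : {perm 'I_h}) :
  (forall v, v \in leaves T -> c' v = s (c v)) -> property1 T c -> property1 T c'.
Proof.
move=> H P q r hs; case: (P q r hs) => sq [sr [nq nr hi]].
have Hq v : v \in leaves q -> c' v = s (c v).
  by move=> hv; apply: H; apply: (subtree_leaves hs); rewrite /= mem_cat hv.
have Hr v : v \in leaves r -> c' v = s (c v).
  by move=> hv; apply: H; apply: (subtree_leaves hs); rewrite /= mem_cat hv orbT.
exists (sq * s)%g, (sr * s)%g; split.
- by move=> i j hij; rewrite !permM !(cc_perm _ Hq); exact: nq.
- by move=> i j hij; rewrite !permM !(cc_perm _ Hr); exact: nr.
- by move=> i hi'; rewrite !permM (inj_eq perm_inj) !(cc_perm _ Hq) !(cc_perm _ Hr); exact: hi.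
Qed.

Definition gm (e : rel V) c u v : bool := [&& u != v, e u v & c u == c v].
Definition Wc (e : rel V) c := \sum_u \sum_v (gm e c u v : nat).

Lemma W_mono (e : rel V) c : (forall u v, e u v = e v u) -> Wc e c = 2 * mono_edges e c.
Proof.
move=> es; rewrite /Wc pair_big /=.
have -> : \sum_(p : V * V | true && true) (gm e c p.1 p.2 : nat) =
          \sum_(p : V * V | gm e c p.1 p.2) 1.
  by rewrite [RHS]big_mkcond; apply: eq_bigr => p _; case: gm.
set ME := [set E : {set V} | [exists u, exists v,
        [&& u != v, e u v, c u == c v & E == [set u; v]]]].
rewrite (partition_big (fun p : V * V => [set p.1; p.2]) (mem ME)); last first.
  move=> [a b] /= /and3P [ab eab cab]; rewrite /ME inE; apply/existsP; exists a; apply/existsP; exists b.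
  by rewrite ab eab cab eqxx.
rewrite /mono_edges -/ME mulnC -sum_nat_const; apply: eq_bigr => E.
move=> hE; rewrite /ME !inE in hE; case/existsP: hE => u /existsP [v /and4P [uv euv cuv /eqP ->]].
rewrite (eq_bigl (fun p => p \in [set (u, v); (v, u)])); last first.
  move=> [a b] /=; rewrite in_set2 !xpair_eqE; apply/idP/idP.
  - move=> /andP [/and3P [ab _ _] /eqP eqs].
    have ha : a \in [set u; v] by rewrite -eqs set21.
    have hb : b \in [set u; v] by rewrite -eqs set22.
    case/set2P: ha => ea; case/set2P: hb => eb; subst.
    1-4: by move: ab; rewrite !eqxx ?orbT ?andbT.
  - case/orP => /andP [/eqP -> /eqP ->]; rewrite /gm.
    + by rewrite uv euv cuv eqxx.
    + by rewrite eq_sym uv es euv eq_sym cuv setUC eqxx.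
rewrite sum1_card cards2 xpair_eqE.
by rewrite (negbTE uv).
Qed.


Lemma card_sumS (T : finType) (A : {set T}) : #|A| = \sum_x (x \in A : nat).
Proof. by rewrite -sum1_card big_mkcond; apply: eq_bigr => x _; case: (x \in A). Qed.

Definition recol c q r (s1 s2 : {perm 'I_h}) v :=
  if v \in leaves q then s1 (c v) else if v \in leaves r then s2 (c v) else c v.

Lemma group_sum (F : V -> nat) (G : 'I_h -> nat) c :
  \sum_v F v * G (c v) = \sum_j (\sum_v F v * (c v == j)) * G j.
Proof.
rewrite [RHS](eq_bigr (fun j => \sum_v F v * (c v == j) * G j)); last by move=> j _; rewrite big_distrl.
rewrite exchange_big; apply: eq_bigr => v _.
rewrite (bigD1 (c v)) //= eqxx muln1 big1 ?addn0 // => j /negPf hj.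
by rewrite eq_sym hj muln0 mul0n.
Qed.

Section Node.
Variables (e : rel V) (T q r : cotree V).
Hypothesis Hcot : is_cotree_of e T.
Hypothesis hs : is_subtree (Node false q r) T.
Variable u0 : V.
Hypothesis hu0 : u0 \in leaves q.

Let inP v := (v \in leaves q) || (v \in leaves r).

Lemma decomp c : Wc e c =
  \sum_u \sum_v ((inP u == inP v) && gm e c u v : nat) +
  2 * \sum_v ((~~ inP v && e u0 v) * \sum_u (inP u && (c u == c v))).
Proof.
case: Hcot => U _ He.
have es u v : e u v = e v u by rewrite !He adj_sym.
rewrite /Wc; transitivity (
  \sum_u \sum_v ((inP u == inP v) && gm e c u v : nat) +
  \sum_u \sum_v ((inP u && ~~ inP v) && gm e c u v : nat) +
  \sum_u \sum_v ((~~ inP u && inP v) && gm e c u v : nat)).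
  rewrite -!big_split; apply: eq_bigr => u _; rewrite -!big_split; apply: eq_bigr => v _ /=.
  by case: (inP u); case: (inP v); case: gm.
have -> : \sum_u \sum_v ((~~ inP u && inP v) && gm e c u v : nat) =
          \sum_u \sum_v ((inP u && ~~ inP v) && gm e c u v : nat).
  rewrite exchange_big; apply: eq_bigr => u _; apply: eq_bigr => v _.
  by rewrite [~~ inP v && _]andbC /gm [v == u]eq_sym es [c v == c u]eq_sym.
rewrite -addnA addnn -mul2n; congr (_ + 2 * _).
rewrite exchange_big; apply: eq_bigr => v _; rewrite big_distrr; apply: eq_bigr => u _ /=.
case hu: (inP u); case hv: (inP v) => //=; rewrite ?mul0n ?muln0 //.
rewrite mulnb /gm.
have -> : u != v by apply/eqP => euv; move: hv; rewrite -euv hu.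
rewrite !He (adj_module (S := Node false q r) (u' := u0) hs U) //=.
- by rewrite mem_cat.
- by rewrite mem_cat hu0.
- by rewrite mem_cat; move: hv; rewrite /inP => ->.
Qed.

Lemma node_main c : exists s1 s2 p : {perm 'I_h},
  [/\ mono_edges e (recol c q r s1 s2) <= mono_edges e c,
      nonincreasing_order (recol c q r s1 s2) q p &
      nonincreasing_order (recol c q r s1 s2) r p].
Proof.
case: (Hcot) => U _ He.
have es u v : e u v = e v u by rewrite !He adj_sym.
have Uqr : uniq (leaves q ++ leaves r) := subtree_uniq hs U.
have Urq : uniq (leaves r ++ leaves q) by rewrite uniq_catC.
have disj z : z \in leaves q -> z \notin leaves r := uniq_disj Uqr.
have disj' z : z \in leaves r -> z \notin leaves q := uniq_disj Urq.
set F := fun v => (~~ inP v && e u0 v : nat).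
set a := fun j => \sum_v F v * (c v == j).
set x := fun j => #|colour_class c q j|.
set y := fun j => #|colour_class c r j|.
have [pi hpi] := @sort_perm h (fun i j => a i <= a j) (fun i j => leq_total _ _)
   (fun yy xx zz => @leq_trans (a yy) (a xx) (a zz)).
have [rq hrq] := @sort_perm h (fun i j => x j <= x i) (fun i j => leq_total _ _)
   (fun yy xx zz h1 h2 => leq_trans h2 h1).
have [rr hrr] := @sort_perm h (fun i j => y j <= y i) (fun i j => leq_total _ _)
   (fun yy xx zz h1 h2 => leq_trans h2 h1).
set s1 := (rq^-1 * pi)%g; set s2 := (rr^-1 * pi)%g.
have k1 k : s1 (rq k) = pi k by rewrite permM permK.
have k2 k : s2 (rr k) = pi k by rewrite permM permK.
exists s1, s2, pi.
set c' := recol c q r s1 s2.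
have Hq v : v \in leaves q -> c' v = s1 (c v) by move=> hv; rewrite /c' /recol hv.
have Hr v : v \in leaves r -> c' v = s2 (c v).
  by move=> hv; rewrite /c' /recol hv (negbTE (disj' v hv)).
have Ho v : ~~ inP v -> c' v = c v.
  by rewrite /c' /recol /inP negb_or => /andP [/negbTE -> /negbTE ->].
split; last first.
- by move=> i j hij; rewrite -!k2 !(cc_perm _ Hr); exact: hrr.
- by move=> i j hij; rewrite -!k1 !(cc_perm _ Hq); exact: hrq.
rewrite -(leq_pmul2l (isT : 0 < 2)) -!W_mono // !decomp.
apply: leq_add.
  rewrite leq_eqVlt; apply/orP; left; apply/eqP; apply: eq_bigr => u _; apply: eq_bigr => v _.
  case E: (inP u == inP v) => //=; congr nat_of_bool.
  rewrite /gm; case uq: (u \in leaves q); case ur: (u \in leaves r);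
    case vq: (v \in leaves q); case vr: (v \in leaves r); rewrite /inP uq ur vq vr /= in E.
  all: try by move: (disj u uq); rewrite ur.
  all: try by move: (disj v vq); rewrite vr.
  all: try by [].
  - by rewrite (Hq u uq) (Hq v vq) (inj_eq perm_inj).
  - by rewrite !He (adj_cross hs U uq vr) andbF.
  - by rewrite !He adj_sym (adj_cross hs U vq ur) andbF.
  - by rewrite (Hr u ur) (Hr v vr) (inj_eq perm_inj).
  - by rewrite !Ho // /inP ?uq ?ur ?vq ?vr.
rewrite leq_pmul2l //.
have Zs (c0 : V -> 'I_h) j : \sum_u (inP u && (c0 u == j) : nat) =
    #|colour_class c0 q j| + #|colour_class c0 r j|.
  rewrite !card_sumS -big_split; apply: eq_bigr => u _; rewrite !inE /inP.
  case uq: (u \in leaves q); case ur: (u \in leaves r) => //=.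
  by move: (disj u uq); rewrite ur.
  by rewrite addn0.
rewrite [X in X <= _](_ : _ = \sum_v F v * (\sum_u (inP u && (c' u == c v) : nat))); last first.
  apply: eq_bigr => v _; rewrite /F; case hv: (inP v); first by rewrite /= !mul0n.
  by rewrite Ho ?hv.
rewrite !(group_sum F (fun j => \sum_u (inP u && (_ u == j) : nat))) -/a.
have cq j : #|colour_class c' q j| = x (s1^-1%g j).
  by rewrite -{1}(permKV s1 j) (cc_perm _ Hq).
have cr j : #|colour_class c' r j| = y (s2^-1%g j).
  by rewrite -{1}(permKV s2 j) (cc_perm _ Hr).
under eq_bigr => j _ do rewrite Zs cq cr mulnDr.
under [X in _ <= X]eq_bigr => j _ do rewrite Zs mulnDr.
rewrite !big_split /=; apply: leq_add.
- apply: (rearr (x := x) (rho := s1^-1%g)) => i j.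
  have inv1 k : s1^-1%g (pi k) = rq k by rewrite -k1 permK.
  rewrite -(permKV pi i) -(permKV pi j) !inv1 => hij; apply: hrq.
  rewrite leqNgt; apply/negP => hlt; have := hpi _ _ (ltnW hlt).
  by rewrite leqNgt hij.
- apply: (rearr (x := y) (rho := s2^-1%g)) => i j.
  have inv2 k : s2^-1%g (pi k) = rr k by rewrite -k2 permK.
  rewrite -(permKV pi i) -(permKV pi j) !inv2 => hij; apply: hrr.
  rewrite leqNgt; apply/negP => hlt; have := hpi _ _ (ltnW hlt).
  by rewrite leqNgt hij.
Qed.

End Node.


Lemma mono_ext (e : rel V) c c' : (forall v, c v = c' v) -> mono_edges e c = mono_edges e c'.
Proof.
move=> H; rewrite /mono_edges; apply: eq_card => E; rewrite !inE.
by apply: eq_existsb => u; apply: eq_existsb => v; rewrite !H.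
Qed.

Lemma claim (e : rel V) T : is_cotree_of e T -> forall S, is_subtree S T ->
  forall c, (forall c', mono_edges e c <= mono_edges e c') ->
  exists c', [/\ (forall c'', mono_edges e c' <= mono_edges e c''), property1 S c' &
                 (forall v, v \notin leaves S -> c' v = c v)].
Proof.
move=> Hcot; case: (Hcot) => U _ _.
elim=> [w|b l IHl r IHr] hS c opt.
  by exists c; split => // q r' hs'; case: hs'.
have hl : is_subtree l T := subtree_trans (subtree_l b l r) hS.
have hr : is_subtree r T := subtree_trans (subtree_r b l r) hS.
have Ulr : uniq (leaves l ++ leaves r) := subtree_uniq hS U.
have Url : uniq (leaves r ++ leaves l) by rewrite uniq_catC.
case: (IHl hl c opt) => c1 [o1 p1 e1].
case: (IHr hr c1 o1) => c2 [o2 p2 e2].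
have p1' : property1 l c2.
  apply: (prop1_perm (s := 1%g) _ p1) => v hv; rewrite perm1 e2 //; exact: uniq_disj Ulr hv.
case: b hS => hS.
  exists c2; split => //.
    move=> q r' hs'; case: hs' => [//|[h'|h']]; [exact: p1' q r' h' | exact: p2 q r' h'].
  by move=> v; rewrite /= mem_cat negb_or => /andP [vl vr]; rewrite e2 // e1.
case: (leaves_nonnil l) => u0 hu0.
case: (node_main Hcot hS hu0 c2) => s1 [s2 [p [m nq nr]]].
exists (recol c2 l r s1 s2); split.
- by move=> c''; apply: leq_trans m (o2 c'').
- move=> q r' hs'; case: hs' => [[-> ->]|[h'|h']].
  + by exists p, p; split => // i _; rewrite eqxx.
  + apply: (prop1_perm (s := s1) _ p1') h' => v hv; by rewrite /recol hv.
  + apply: (prop1_perm (s := s2) _ p2) h' => v hv.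
    by rewrite /recol hv (negbTE (uniq_disj Url hv)).
- move=> v; rewrite /= mem_cat negb_or => /andP [vl vr].
  by rewrite /recol (negbTE vl) (negbTE vr) e2 // e1.
Qed.

End Main.

Unset Implicit Arguments.
Set Strict Implicit.
Theorem mainTheorem12 (V : finType) (e : rel V) (T : cotree V) (d : nat) :
  is_cotree_of e T ->
  d <= chi e [set: V] ->
  (0 < #|V| -> d < chi e [set: V]) ->
  exists c : V -> 'I_(chi e [set: V] - d),
    (forall c' : V -> 'I_(chi e [set: V] - d), mono_edges e c <= mono_edges e c') /\
    property1 T c.
Proof.
move=> Hcot hd hlt.
case: (Hcot) => U Hall He.
have [v0 _] := leaves_nonnil T.
have hV : 0 < #|V| by apply/card_gt0P; exists v0.
have hpos : 0 < chi e [set: V] - d by rewrite subn_gt0; exact: hlt hV.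
pose i0 : 'I_(chi e [set: V] - d) := Ordinal hpos.
have exP : exists n, [exists c : {ffun V -> 'I_(chi e [set: V] - d)}, mono_edges e c == n].
  by exists (mono_edges e [ffun=> i0]); apply/existsP; exists [ffun=> i0].
case: (ex_minnP exP) => m /existsP [c0 /eqP hc0] hmin.
have opt : forall c' : V -> 'I_(chi e [set: V] - d), mono_edges e c0 <= mono_edges e c'.
  move=> c'; rewrite hc0; apply: hmin; apply/existsP; exists (finfun c').
  by rewrite (mono_ext e (c' := c')) // => v; rewrite ffunE.
have [c [o p _]] := claim Hcot (subtree_refl T) opt.
by exists c; split.
Qed.
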